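(* Let $X$ be a $T_1$ space and $\mathcal{P}$ an ideal of closed subsets of $X$ containing every singleton subset of $X$. Then $X$ is $\tau\mathcal{P}$-compact if and only if $X$ is finite.
   Context: An ideal of closed subsets of $X$ is a family $\mathcal{P}$ of closed subsets closed under finite unions and under passing to closed subsets. $D_f$ is the set of discontinuity points of $f\in\mathbb{R}^X$; $C(X)_\mathcal{P}=\{f\in\mathbb{R}^X\colon\overline{D_f}\in\mathcal{P}\}$; for $f\in C(X)_\mathcal{P}$, $Z_\mathcal{P}(f)=\{x\colon f(x)=0\}$ and $Z_\mathcal{P}[X]$ is the set of all such sets. $X$ is $\tau\mathcal{P}$-compact if every subfamily of $Z_\mathcal{P}[X]$ with the finite intersection property has nonempty intersection. *)

(* Defs.v *)
From HB Require Import structures.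
From mathcomp Require Import all_boot all_order all_algebra.
From mathcomp Require Import all_classical all_reals all_analysis.
From mathcomp Require Import Rstruct Rstruct_topology.
From Stdlib Require Import Rdefinitions.
Set Implicit Arguments. Unset Strict Implicit. Unset Printing Implicit Defensive.
Import Order.TTheory GRing.Theory Num.Theory.
Local Open Scope classical_set_scope.

Definition closed_ideal (X : topologicalType) (P : set (set X)) : Prop :=
  (forall A, P A -> closed A) /\
  (forall A B, P A -> P B -> P (A `|` B)) /\
  (forall A B, P A -> closed B -> B `<=` A -> P B).

Definition discont (X : topologicalType) (f : X -> R) : set X :=
  [set x | ~ {for x, continuous f}].

Definition CP (X : topologicalType) (P : set (set X)) : set (X -> R) :=
  [set f | P (closure (discont f))].

Definition ZP (X : topologicalType) (f : X -> R) : set X := [set x | f x = 0%R].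
Definition ZPX (X : topologicalType) (P : set (set X)) : set (set X) :=
  [set Z | exists2 f, CP P f & Z = ZP f].

Definition fip (X : Type) (F : set (set X)) : Prop :=
  forall G : set (set X), finite_set G -> G `<=` F -> \bigcap_(A in G) A !=set0.

Definition tauP_compact (X : topologicalType) (P : set (set X)) : Prop :=
  forall F : set (set X), F `<=` ZPX P -> fip F -> \bigcap_(A in F) A !=set0.

(* Main.v *)
Require Import Defs.
From HB Require Import structures.
From mathcomp Require Import all_boot all_order all_algebra.
From mathcomp Require Import all_classical all_reals all_analysis.
From mathcomp Require Import Rstruct Rstruct_topology.
From Stdlib Require Import Rdefinitions.
Import GRing.Theory Num.Theory.
Local Open Scope classical_set_scope.

Lemma ind_cont (X : topologicalType) (x y : X) :
  accessible_space X -> y <> x ->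
  {for y, continuous (fun z : X => if z == x then 1%R else 0%R : R)}.
Proof.
move=> acc yx B HB.
have op : open (~` [set x]) by rewrite openC; exact: accessible_closed_set1.
have : nbhs y (~` [set x]) by apply: open_nbhs_nbhs; split.
apply: filterS => z /= zx.
have -> : (z == x) = false by apply/negbTE/eqP.
move: (nbhs_singleton HB); rewrite /=.
by have -> : (y == x) = false by apply/negbTE/eqP.
Qed.

Theorem corollary5p6 (X : topologicalType) (P : set (set X)) :
  accessible_space X -> closed_ideal P -> (forall x : X, P [set x]) ->
  (tauP_compact P <-> finite_set [set: X]).
Proof.
move=> acc [Pcl [PU PS]] P1; split.
- move=> comp; apply: contrapT => inf.
  pose g (x : X) := (fun z : X => if z == x then 1%R else 0%R : R).
  have Zg x : ZP (g x) = ~` [set x].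
    apply/seteqP; split => z; rewrite /ZP /g /=.
      by case: eqP => // _ /eqP; rewrite oner_eq0.
    by move=> zx; case: eqP.
  have CPg x : CP P (g x).
    rewrite /CP; apply: (PS [set x]) => //; first exact: closed_closure.
    rewrite [X in _ `<=` X](closure_id _).1; last exact: accessible_closed_set1.
    apply: closureS => z; rewrite /discont /= => nc.
    apply: contrapT => zx; apply: nc; exact: ind_cont.
  pose F := [set ~` [set x] | x in [set: X]].
  have [z Fz] : \bigcap_(A in F) A !=set0.
    apply: comp.
      move=> A [x _ <-]; exists (g x) => //.
    move=> G finG GF.
    have fin : finite_set (\bigcup_(A in G) ~` A).
      apply: bigcup_finite => // A /GF [x _ <-]; rewrite setCK; exact: finite_set1.
    have [w Hw] : exists w, ~ (\bigcup_(A in G) ~` A) w.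
      apply: contrapT => /forallNP H; apply: inf.
      apply: sub_finite_set fin => w _; exact: contrapT (H w).
    exists w => A GA; apply: contrapT => nA; apply: Hw; exists A => //.
  by have := Fz (~` [set z]) (ex_intro2 _ _ z I erefl); apply.
- move=> finX F _ fipF.
  have ex : forall x : X, exists A : set X,
      (\bigcap_(B in F) B) x \/ (F A /\ ~ A x).
    move=> x; case: (pselect ((\bigcap_(B in F) B) x)) => H.
      by exists setT; left.
    move/existsNP: H => [A /not_implyP [FA nA]].
    by exists A; right.
  have [f Hf] := choice ex.
  have GF : f @` [set x | ~ (\bigcap_(B in F) B) x] `<=` F.
    move=> A [x /= nx <-]; case: (Hf x) => [H|[]//]; by case: nx.
  have [y Gy] := fipF _
    (finite_image f (sub_finite_set (@subsetT _ [set x | ~ (\bigcap_(B in F) B) x]) finX)) GF.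
  exists y; apply: contrapT => ny.
  case: (Hf y) => [//|[_ nfy]]; apply: nfy; apply: Gy; by exists y.
Qed.
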